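(* Let $\lambda\in\{1,2\}$ and let $S:\mathbb A^{(\lambda)}_{\rm triv}(\mathbb D^2)\to\mathbb A^{(\lambda)}_{\rm sign}(\mathbb D^2)$ be defined by $Sf=J_{\boldsymbol s}f$, where $J_{\boldsymbol s}(z_1,z_2)=z_1-z_2$. Then $S$ does not have a bounded inverse.
   Context: $\mathbb A^{(2)}(\mathbb D^2)$ is the Bergman space of $\mathbb D^2$ (holomorphic functions with reproducing kernel $\prod_{i=1}^2(1-z_i\bar w_i)^{-2}$, in which $\|z_1^{a}z_2^{b}\|^2=\frac{a!\,b!}{(2)_a(2)_b}$), and $\mathbb A^{(1)}(\mathbb D^2)=H^2(\mathbb D^2)$ is the Hardy space (kernel $\prod_i(1-z_i\bar w_i)^{-1}$). $\mathbb A^{(\lambda)}_{\rm triv}(\mathbb D^2)$ is the subspace of symmetric functions $f(z_1,z_2)=f(z_2,z_1)$, and $\mathbb A^{(\lambda)}_{\rm sign}(\mathbb D^2)$ the subspace of antisymmetric functions $f(z_1,z_2)=-f(z_2,z_1)$. $J_{\boldsymbol s}$ is the Jacobian determinant of the symmetrization map $(z_1+z_2,z_1z_2)$. *)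

(* Defs.v *)
From HB Require Import structures.
From mathcomp Require Import all_boot all_order all_algebra.
From mathcomp Require Import all_classical all_reals all_analysis.
From mathcomp Require Import complex.
Set Implicit Arguments. Unset Strict Implicit. Unset Printing Implicit Defensive.
Import Order.TTheory GRing.Theory Num.Theory.
Local Open Scope ring_scope.
Local Open Scope classical_set_scope.

Fixpoint rising (x n : nat) : nat :=
  match n with 0 => 1%N | n'.+1 => (rising x n' * (x + n'))%N end.

Section Spaces.
Variable R : realType.
Local Notation C := R[i].

(* A holomorphic function on D^2 is encoded by its Taylor coefficients:
   f(z1,z2) = sum_{a,b} c a b * z1^a * z2^b. *)
Definition coef2 := nat -> nat -> C.

(* ||z1^a z2^b||^2 in A^(lam)(D^2) = a! b! / ((lam)_a (lam)_b) *)
Definition mono_wt (lam a b : nat) : R :=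
  (a`! * b`!)%:R / (rising lam a * rising lam b)%:R.

Definition sqnorm (lam : nat) (c : coef2) : \bar R :=
  \esum_(p in [set: nat * nat])
    (((ComplexField.Normc.normc (c p.1 p.2)) ^+ 2 * mono_wt lam p.1 p.2)%:E).

Definition Aspace (lam : nat) : set coef2 := [set c | (sqnorm lam c < +oo)%E].

Definition Atriv (lam : nat) : set coef2 :=
  [set c | c \in Aspace lam /\ forall a b, c a b = c b a].
Definition Asign (lam : nat) : set coef2 :=
  [set c | c \in Aspace lam /\ forall a b, c a b = - c b a].

(* multiplication by J_s(z1,z2) = z1 - z2 on coefficients *)
Definition mulJ (c : coef2) : coef2 := fun a b =>
  (if a is a'.+1 then c a' b else 0) - (if b is b'.+1 then c a b' else 0).

Definition bounded_inverse (lam : nat) (T : coef2 -> coef2) : Prop :=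
  (forall g, Asign lam g -> Atriv lam (T g)) /\
      (forall g h, Asign lam g -> Asign lam h ->
         T (fun a b => g a b + h a b) = (fun a b => T g a b + T h a b)) /\
      (forall (k : C) g, Asign lam g -> T (fun a b => k * g a b) = (fun a b => k * T g a b)) /\
      (exists M : R, forall g, Asign lam g -> (sqnorm lam (T g) <= (M ^+ 2)%:E * sqnorm lam g)%E) /\
      (forall f, Atriv lam f -> T (mulJ f) = f) /\
      (forall g, Asign lam g -> mulJ (T g) = g).

End Spaces.

(* Main.v *)
Require Import Defs.
From HB Require Import structures.
From mathcomp Require Import all_boot all_order all_algebra.
From mathcomp Require Import all_classical all_reals all_analysis.
From mathcomp Require Import complex.
From mathcomp Require Import zify.
Set Implicit Arguments. Unset Strict Implicit. Unset Printing Implicit Defensive.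
Import Order.TTheory GRing.Theory Num.Theory.
Local Open Scope ring_scope.
Local Open Scope classical_set_scope.

Section P.
Variable R : realType.
Local Notation C := R[i].

Lemma mulJ_inj (c d : coef2 R) : mulJ c = mulJ d -> c = d.
Proof.
move=> e.
have e1 a b : mulJ c a b = mulJ d a b by rewrite e.
have H : forall a b, c a b = d a b.
  elim=> [|a IH] b.
    have := e1 0%N b.+1; rewrite /mulJ /= !sub0r => /oppr_inj //.
  have := e1 a.+1 b.+1; rewrite /mulJ /= IH => /addrI /oppr_inj //.
by apply/funext => a; apply/funext => b.
Qed.

Definition fn (n : nat) : coef2 R := fun a b => if (a + b == n)%N then 1 else 0.
Definition gn (n : nat) : coef2 R := fun a b =>
  if (a == n.+1) && (b == 0%N) then 1 else if (a == 0%N) && (b == n.+1) then -1 else 0.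

Lemma mulJ_fn n : mulJ (fn n) = gn n.
Proof.
apply/funext => a; apply/funext => b; rewrite /mulJ /fn /gn.
case: a => [|a]; case: b => [|b] /=.
- by rewrite subr0.
- by rewrite sub0r add0n eqSS; case: (b == n); rewrite ?oppr0.
- by rewrite subr0 addn0 eqSS eqxx andbT; case: (a == n).
- by rewrite addnS addSn subrr andbF.
Qed.

Lemma normc1' : ComplexField.Normc.normc (1 : C) = 1.
Proof. exact: ComplexField.Normc.normc1. Qed.
Lemma normc0' : ComplexField.Normc.normc (0 : C) = 0.
Proof. exact: ComplexField.Normc.normc0. Qed.
Lemma normcN1' : ComplexField.Normc.normc (-1 : C) = 1.
Proof. by rewrite /ComplexField.Normc.normc /= oppr0 expr0n /= addr0 sqrrN expr1n sqrtr1. Qed.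

Lemma mono_wtC lam a b : mono_wt R lam a b = mono_wt R lam b a.
Proof. by rewrite /mono_wt mulnC [(rising _ a * _)%N]mulnC. Qed.

Lemma mono_wt_gt0 lam a b : (0 < lam)%N -> 0 < mono_wt R lam a b.
Proof.
move=> l0; rewrite /mono_wt divr_gt0 // ltr0n ?muln_gt0 ?fact_gt0 //.
have h x : (0 < rising lam x)%N by elim: x => //= x IH; rewrite muln_gt0 IH addn_gt0 l0.
by rewrite !h.
Qed.

Local Notation nc := (@ComplexField.Normc.normc R).

Lemma wge0 lam a b : 0 <= mono_wt R lam a b.
Proof. by rewrite /mono_wt divr_ge0. Qed.

Lemma sqnorm_gn lam n :
  (sqnorm lam (gn n) <= (mono_wt R lam n.+1 0 + mono_wt R lam n.+1 0)%:E)%E.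
Proof.
set w := mono_wt R lam n.+1 0.
pose G1 := fun p : nat * nat => if p \in [set (n.+1, 0%N)] then w%:E else 0%E.
pose G2 := fun p : nat * nat => if p \in [set (0%N, n.+1)] then w%:E else 0%E.
have w0 : 0 <= w by exact: wge0.
rewrite /sqnorm (@le_trans _ _ (\esum_(p in [set: nat * nat]) (G1 p + G2 p))%E) //.
  apply: le_esum => -[a b] _ /=; rewrite /G1 /G2 !in_set1 /gn.
  case: (boolP ((a == n.+1) && (b == 0%N))) => [/andP[/eqP-> /eqP->]|h1].
    by rewrite eqxx /= ?oppr0 ?sqrrN ?expr1n ?expr0n /= ?addr0 ?sqrtr1 ?expr1n mul1r.
  case: (boolP ((a == 0%N) && (b == n.+1))) => [/andP[/eqP-> /eqP->]|h2].
    by rewrite eqxx /= ?oppr0 ?sqrrN ?expr1n ?expr0n /= ?addr0 ?sqrtr1 ?expr1n mul1r add0e /w mono_wtC.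
  rewrite normc0' expr0n /= mul0r.
  by case: ifP; case: ifP => _ _; rewrite ?adde_ge0 ?lee_fin.
rewrite esumD; last 2 first.
- by move=> p _; rewrite /G1; case: ifP; rewrite ?lee_fin.
- by move=> p _; rewrite /G2; case: ifP; rewrite ?lee_fin.
rewrite /G1 /G2 -!(esum_mkcond _ (fun _ => w%:E)) !esum_set1 ?lee_fin //.
Qed.

Lemma sqnorm_fn lam n :
  ((\sum_(i < n.+1) mono_wt R lam i (n - i))%:E <= sqnorm lam (fn n))%E.
Proof.
pose e := fun i : nat => (i, (n - i)%N).
pose P := fun i : nat => (i <= n)%N.
pose F := fun p : nat * nat => ((nc (fn n p.1 p.2)) ^+ 2 * mono_wt R lam p.1 p.2)%:E.
have F0 p : (0 <= F p)%E by rewrite /F lee_fin mulr_ge0 ?sqr_ge0 ?wge0.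
rewrite /sqnorm -/F.
apply: (@le_trans _ _ (\esum_(p in [set: nat * nat]) (if p \in e @` P then F p else 0))%E); last first.
  by apply: le_esum => p _; case: ifP => // _; exact: F0.
rewrite -esum_mkcond esum_pred_image //; last first.
  by move=> i j _ _ [].
apply: le_trans; last first.
  apply: (@nneseries_lim_ge _ _ _ 0%N n.+1) => i _ _; exact: F0.
rewrite -sumEFin big_mkord.
rewrite [X in (_ <= X)%E](eq_bigl (fun=> true)); last by move=> i; rewrite /P -ltnS ltn_ord.
apply: lee_sum => i _.
have hi : (i + (n - i) == n)%N by rewrite subnKC // -ltnS ltn_ord.
by rewrite /F /e /fn /= hi normc1' expr1n mul1r.
Qed.

Lemma harm_unb (K : R) : exists n, K < \sum_(i < n.+1) (i.+1%:R)^-1.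
Proof.
case: (pselect (exists n, K < \sum_(i < n.+1) (i.+1%:R)^-1)) => [//|/forallNP HH]; exfalso.
have H' n : \sum_(i < n.+1) (i.+1%:R)^-1 <= K.
  by have := HH n; move/negP; rewrite -leNgt.
apply: (@dvg_harmonic R); apply: nondecreasing_is_cvgn.
  move=> p q pq; rewrite /series /=.
  by apply: (@nondecreasing_series _ harmonic xpredT 0%N) => // k _ _; exact: harmonic_ge0.
exists K => _ [[|m] _ <-].
  rewrite /series /= big_geq //; apply: le_trans (H' 0%N).
  by rewrite big_ord1 invr_ge0.
by rewrite seriesEord /=; exact: H' m.
Qed.

Lemma rising1 a : rising 1 a = a`!.
Proof. by elim: a => //= a ->; rewrite factS mulnC add1n. Qed.
Lemma rising2 a : rising 2 a = a.+1`!.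
Proof. by elim: a => //= a ->; rewrite [in RHS]factS mulnC add2n. Qed.

Lemma mono_wt1 a b : mono_wt R 1 a b = 1.
Proof. by rewrite /mono_wt !rising1 divff // pnatr_eq0 muln_eq0 negb_or -!lt0n !fact_gt0. Qed.

Lemma mono_wt2 a b : mono_wt R 2 a b = ((a.+1 * b.+1)%N%:R)^-1.
Proof.
rewrite /mono_wt !rising2 !factS.
have -> : (a.+1 * a`! * (b.+1 * b`!) = (a.+1 * b.+1) * (a`! * b`!))%N by rewrite mulnACA.
rewrite [X in _ / X]natrM invfM mulrCA divff ?mulr1 //.
Qed.

Lemma w_ge lam n i : (lam = 1 \/ lam = 2)%N -> (i <= n)%N ->
  mono_wt R lam n.+1 0 * (i.+1%:R)^-1 <= mono_wt R lam i (n - i).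
Proof.
case=> -> hi.
  by rewrite !mono_wt1 mul1r invf_le1 // ler1n.
rewrite !mono_wt2 -invfM -natrM lef_pV2 ?posrE ?ltr0n ?muln_gt0 // ler_nat.
nia.
Qed.
End P.
From mathcomp Require Import lra.
Lemma final_ineq (R : realType) (w H S M : R) :
  2 * M ^+ 2 < H -> w * H <= S -> S <= M ^+ 2 * (w + w) -> 0 < w -> False.
Proof. move=> *; nra. Qed.

Unset Implicit Arguments.
Theorem proposition4p21 (R : realType) (lam : nat) (hlam : lam = 1%N \/ lam = 2%N) :
  ~ exists T : coef2 R -> coef2 R, bounded_inverse lam T.
Proof.
move=> [T [hAt [_ [_ [[M hM] [_ hinv]]]]]].
have [n hn] := harm_unb (2 * M ^+ 2 : R).
set w := mono_wt R lam n.+1 0.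
have wpos : 0 < w by apply: mono_wt_gt0; case: hlam => ->.
have gA : Asign lam (gn R n).
  split.
    rewrite inE /Aspace /=; exact: (le_lt_trans (sqnorm_gn R lam n) (ltry _)).
  move=> a b; rewrite /gn.
  case: a => [|a]; case: b => [|b] /=; rewrite ?oppr0 ?eqxx ?andbT ?andbF ?oppr0 //.
  - by case: (b.+1 == n.+1); rewrite ?oppr0.
  - by case: (a.+1 == n.+1); rewrite ?opprK ?oppr0.
have hTg : T (gn R n) = fn R n by apply: mulJ_inj; rewrite hinv // mulJ_fn.
have h3 : ((M ^+ 2)%:E * sqnorm lam (gn R n) <= (M ^+ 2 * (w + w))%:E)%E.
  rewrite EFinM; apply: (lee_wpmul2l _ (sqnorm_gn R lam n)); by rewrite lee_fin sqr_ge0.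
have := hM _ gA; rewrite hTg => hM2.
have := le_trans (sqnorm_fn R lam n) (le_trans hM2 h3).
rewrite lee_fin => hle.
have hsum : w * \sum_(i < n.+1) (i.+1%:R)^-1 <= \sum_(i < n.+1) mono_wt R lam i (n - i).
  rewrite mulr_sumr; apply: ler_sum => i _; apply: w_ge => //.
  by rewrite -ltnS ltn_ord.
move: hn hsum hle wpos; set H := \sum_(i < n.+1) _; set S := \sum_(i < n.+1) _.
move=> h1 h2 h3' h4; exact: (final_ineq h1 h2 h3' h4).
Qed.
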